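(* There exist absolute constants $C>0$ and $n_0$ such that for all $n\ge n_0$ and all integers $1\le k\le n/\log n$ with $nk$ even, every random graph $\mathcal G$ on vertex set $[n]$ whose law is supported on the set of $k$-regular simple graphs satisfies $$\mathcal B(\mathcal G)\le C\,kn\log(n/k).$$
   Context: A random graph $\mathcal G$ on $[n]$ is identified with the random vector of edge indicators $(e^{ij})_{1\le i<j\le n}\in\{0,1\}^{\binom n2}$. For a random vector $x=(x^1,\dots,x^m)$ on a finite product set, the dual total correlation is $\mathcal B(x)=\mathcal H(x)-\sum_{i=1}^m\mathcal H(x^i\mid x^{-i})$, with $\mathcal H$ Shannon entropy and $x^{-i}$ the vector with coordinate $i$ removed. *)

(* Defs.v *)
From HB Require Import structures.
From mathcomp Require Import all_boot all_order all_algebra.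
From mathcomp Require Import all_classical all_reals.
From mathcomp Require Import Rstruct exp.
Set Implicit Arguments. Unset Strict Implicit. Unset Printing Implicit Defensive.
Import Order.TTheory GRing.Theory Num.Theory.
Local Open Scope ring_scope.

Notation RR := Rdefinitions.R.

Definition edge (n : nat) := {p : 'I_n * 'I_n | (p.1 < p.2)%N}.

(* A graph on [n] = its vector of edge indicators (e^{ij})_{i<j}. *)
Definition graph (n : nat) := {ffun edge n -> bool}.

Definition degree (n : nat) (g : graph n) (v : 'I_n) : nat :=
  #|[set e : edge n | g e && (((val e).1 == v) || ((val e).2 == v))]|.

Definition regular (n k : nat) (g : graph n) : Prop :=
  forall v : 'I_n, degree g v = k.

Definition is_distr (T : finType) (p : {ffun T -> RR}) : Prop :=
  (forall x, 0 <= p x) /\ \sum_x p x = 1.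

Definition entropy (T : finType) (p : {ffun T -> RR}) : RR :=
  - \sum_x (if p x == 0 then 0 else p x * ln (p x)).

(* For a random vector x in {ffun I -> A}, the law of x^{-i}, evaluated at
   the restriction of x to I \ {i}: P(x^{-i} = y^{-i}). *)
Definition marg_off (I A : finType) (p : {ffun {ffun I -> A} -> RR}) (i : I)
  (y : {ffun I -> A}) : RR :=
  \sum_(z : {ffun I -> A} | [forall j, (j != i) ==> (z j == y j)]) p z.

Definition cond_entropy_coord (I A : finType) (p : {ffun {ffun I -> A} -> RR})
  (i : I) : RR :=
  - \sum_y (if p y == 0 then 0 else p y * ln (p y / marg_off p i y)).

Definition dual_total_correlation (I A : finType)
  (p : {ffun {ffun I -> A} -> RR}) : RR :=
  entropy p - \sum_i cond_entropy_coord p i.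

(* Main.v *)
Require Import Defs.
From HB Require Import structures.
From mathcomp Require Import all_boot all_order all_algebra.
From mathcomp Require Import all_classical all_reals.
From mathcomp Require Import Rstruct exp.
From mathcomp Require Import sequences.
From mathcomp Require Rstruct_topology.
From mathcomp Require Import zify ring lra.
From Stdlib Require Rpower RIneq.
Import Order.TTheory GRing.Theory Num.Theory.
Local Open Scope ring_scope.


Section Comb.
Variable n : nat.

Definition inc (g : graph n) (v : 'I_n) : {set edge n} :=
  [set e : edge n | g e && (((val e).1 == v) || ((val e).2 == v))].

Lemma degE g v : degree g v = #|inc g v|. Proof. by []. Qed.

Lemma deg_step (g1 g2 : graph n) (e : edge n) :
  (forall f, f != e -> g1 f = g2 f) -> g1 e -> ~~ g2 e ->
  degree g1 (val e).1 = (degree g2 (val e).1).+1.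
Proof.
move=> Hag H1 H2; rewrite !degE.
have -> : inc g1 (val e).1 = e |: inc g2 (val e).1.
  apply/setP => f; rewrite !inE.
  have [->|fe] := eqVneq f e; first by rewrite H1 eqxx.
  by rewrite Hag.
by rewrite cardsU1 inE (negbTE H2).
Qed.

Lemma reg_agree (k : nat) (g1 g2 : graph n) (e : edge n) :
  regular k g1 -> regular k g2 ->
  (forall f, f != e -> g1 f = g2 f) -> g1 = g2.
Proof.
move=> R1 R2 Hag; apply/ffunP => f.
have [->|fe] := eqVneq f e; last exact: Hag.
case E1: (g1 e); case E2: (g2 e) => //.
  have := @deg_step g1 g2 e Hag; rewrite E1 E2 => /(_ isT isT).
  by rewrite R1 R2; lia.
have Hag' : forall f, f != e -> g2 f = g1 f by move=> f' /Hag ->.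
have := @deg_step g2 g1 e Hag'; rewrite E1 E2 => /(_ isT isT).
by rewrite R1 R2; lia.
Qed.

Definition other (v : 'I_n) (e : edge n) := if (val e).1 == v then (val e).2 else (val e).1.

Definition nb (g : graph n) : {ffun 'I_n -> {set 'I_n}} :=
  [ffun v => other v @: inc g v].

Lemma other_inj0 v (e f : edge n) :
  ((val e).1 == v) || ((val e).2 == v) -> ((val f).1 == v) || ((val f).2 == v) ->
  other v e = other v f -> e = f.
Proof.
move: e f => [[a b] hab] [[c d] hcd]; rewrite /other /= => H1 H2 E.
apply: val_inj => /=.
have hab' : (a < b)%N := hab. have hcd' : (c < d)%N := hcd.
move: H1 H2 E.
case: (eqVneq a v) => [Ea|av]; case: (eqVneq c v) => [Ec|cv] //=; subst.
- by move=> _ _ ->.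
- move=> _ /eqP Ed Eb; subst; lia.
- move=> /eqP Eb _ Ea; subst; lia.
- by move=> /eqP -> /eqP -> ->.
Qed.
Lemma other_inj (g : graph n) v : {in inc g v &, injective (other v)}.
Proof.
move=> e f; rewrite !inE => /andP[_ H1] /andP[_ H2]; exact: other_inj0.
Qed.

Lemma card_nb k (g : graph n) v : regular k g -> #|nb g v| = k.
Proof. move=> R; rewrite ffunE card_in_imset; [exact: R v | exact: other_inj]. Qed.

Lemma nb_rec (g : graph n) (e : edge n) : g e = ((val e).2 \in nb g (val e).1).
Proof.
rewrite ffunE; apply/idP/imsetP.
  move=> ge; exists e; first by rewrite inE ge eqxx.
  by rewrite /other eqxx.
move=> [f]; rewrite inE => /andP[gf Hf] Eo.
have -> : e = f; last by [].
apply: (@other_inj0 (val e).1) => //; first by rewrite eqxx.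
by rewrite -Eo /other eqxx.
Qed.

Lemma nb_inj : injective nb.
Proof.
move=> g1 g2 E; apply/ffunP => e; by rewrite !nb_rec E.
Qed.
End Comb.

Lemma card_supp n k (p : {ffun graph n -> RR}) :
  (forall g, p g != 0%R -> regular k g) ->
  (#|[set g | p g != 0%R]| <= 'C(n, k) ^ n)%N.
Proof.
move=> Hreg; rewrite -(card_imset _ (@nb_inj n)).
have H : (@nb n) @: [set g | p g != 0%R] \subset
         [set f : {ffun 'I_n -> {set 'I_n}} | f \in ffun_on [set A : {set 'I_n} | #|A| == k]].
  apply/fintype.subsetP => f /imsetP[g]; rewrite inE => /Hreg Rg ->.
  by rewrite inE; apply/ffun_onP => v; rewrite inE (@card_nb n k g v Rg).
apply: (leq_trans (subset_leq_card H)).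
by rewrite cardsE card_ffun_on card_draws !card_ord.
Qed.

Lemma cond0 n k (p : {ffun graph n -> RR}) :
  (forall g, p g != 0%R -> regular k g) -> forall i, cond_entropy_coord p i = 0.
Proof.
move=> Hreg i; rewrite /cond_entropy_coord big1 ?oppr0 // => y _.
case: ifPn => // py.
have -> : marg_off p i y = p y.
  rewrite /marg_off (bigD1 y) /=; last by apply/forallP => j; apply/implyP.
  rewrite big1 ?addr0 // => z /andP[Hz zy].
  apply/eqP; apply: contraNT zy => pz.
  apply/eqP; apply: (@reg_agree n k z y i (Hreg _ pz) (Hreg _ py)).
  by move=> f fi; move/forallP: Hz => /(_ f); rewrite fi /= => /eqP.
by rewrite divff // ln1 mulr0.
Qed.

Lemma ln_le_sub1 (y : RR) : 0 < y -> ln y <= y - 1.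
Proof.
move=> y0; have := expR_ge1Dx (ln y); rewrite lnK ?posrE // => H.
lra.
Qed.

Lemma entropy_le (T : finType) (p : {ffun T -> RR}) :
  is_distr p -> entropy p <= ln (#|[set x | p x != 0]|%:R).
Proof.
move=> [p0 p1]; set S := [set x | p x != 0]; set N : RR := #|S|%:R.
have NS : (0 < #|S|)%N.
  rewrite lt0n; apply/negP => /eqP /cards0_eq S0.
  move: p1; rewrite big1 => [/eqP|x _]; first by rewrite eq_sym oner_eq0.
  apply/eqP; apply: contraT => px.
  have : x \in S by rewrite inE.
  by rewrite S0 inE.
have N0 : 0 < N by rewrite ltr0n.
rewrite /entropy -sumrN.
apply: (@le_trans _ _ (\sum_x ((if x \in S then N^-1 else 0) - p x + p x * ln N))).
  apply: ler_sum => x _; rewrite inE.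
  case: ifPn => [/eqP ->|px]; first by rewrite /= mul0r oppr0; lra.
  have px0 : 0 < p x by rewrite lt0r px p0.
  rewrite /=.
  have := @ln_le_sub1 ((N * p x)^-1) (ltac:(by rewrite invr_gt0 mulr_gt0)).
  rewrite lnV ?posrE ?mulr_gt0 // lnM ?posrE // => H.
  have H2 := ler_wpM2l (ltW px0) H.
  have E : p x * (N * p x)^-1 = N^-1.
    by rewrite invfM mulrA mulrC mulrA mulVf ?gt_eqF // mul1r.
  nra.
rewrite !big_split /= -big_mkcond sumr_const sumrN -mulr_suml p1.
rewrite -mulr_natr mulVf ?gt_eqF //; lra.
Qed.



Lemma ffact_le_exp (n k : nat) : (n ^_ k <= n ^ k)%N.
Proof.
elim: k n => [|k IH] n //; case: n => [|n] //.
rewrite ffactSS expnS leq_mul2l /=.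
apply: leq_trans (IH n) _.
case: k {IH} => [|k]; first by [].
by rewrite leq_exp2r.
Qed.

Lemma stepS (k : nat) : (k.+1%:R : RR) ^+ k <= expR 1 * k%:R ^+ k.
Proof.
case: k => [|k]; first by rewrite !expr0 mulr1; apply: ltW; rewrite expR_gt1.
set m : RR := k.+1%:R.
have m0 : 0 < m by rewrite ltr0n.
have -> : (k.+2%:R : RR) = m * (1 + m^-1).
  by rewrite mulrDr mulr1 mulfV ?gt_eqF // /m -[in LHS]addn1 natrD.
rewrite exprMn [X in _ <= X]mulrC; apply: ler_wpM2l; first by rewrite exprn_ge0 ?ltW.
have -> : expR (1 : RR) = expR (m^-1) ^+ k.+1.
  by rewrite -expRM_natl -/m mulfV ?gt_eqF.
apply: lerXn2r; rewrite ?nnegrE ?expR_ge0 ?expR_ge1Dx //.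
by rewrite addr_ge0 ?invr_ge0 ?ltW.
Qed.

Lemma pow_le_fact (k : nat) : (k%:R : RR) ^+ k <= expR k%:R * k`!%:R.
Proof.
elim: k => [|k IH]; first by rewrite expr0 expR0 mul1r.
rewrite exprSr factS natrM -[in expR _]natr1 expRD.
set K : RR := k.+1%:R.
have K0 : 0 <= K by rewrite /K ler0n.
apply: le_trans (ler_wpM2r K0 (stepS k)) _.
have e0 : 0 <= expR (1 : RR) by rewrite expR_ge0.
have e1 : 0 <= expR (k%:R : RR) by rewrite expR_ge0.
have f0 : 0 <= (k`!%:R : RR) by rewrite ler0n.
have p0 : 0 <= (k%:R : RR) ^+ k by rewrite exprn_ge0 ?ler0n.
have H := ler_wpM2l (mulr_ge0 e0 K0) IH.
apply: (@le_trans _ _ ((expR 1 * K) * (expR k%:R * k`!%:R))).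
  have E : expR 1 * k%:R ^+ k * K = expR 1 * K * k%:R ^+ k :> RR by ring.
  by rewrite E.
by rewrite le_eqVlt; apply/orP; left; apply/eqP; ring.
Qed.

Lemma binom_ln (n k : nat) : (1 <= k)%N -> (k <= n)%N ->
  ln ('C(n, k)%:R : RR) <= k%:R * (1 + ln (n%:R / k%:R)).
Proof.
move=> k1 kn.
set c : RR := 'C(n, k)%:R.
have c1 : 1 <= c by rewrite /c ler1n bin_gt0.
have c0 : 0 < c by apply: lt_le_trans c1.
have kp : 0 < (k%:R : RR) by rewrite ltr0n.
have np : 0 < (n%:R : RR) by rewrite ltr0n; apply: leq_trans kn.
have H1 : c * k`!%:R <= n%:R ^+ k.
  by rewrite /c -natrM -natrX ler_nat bin_ffact ffact_le_exp.
have H2 : c * (k%:R ^+ k) <= expR k%:R * n%:R ^+ k.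
  apply: le_trans (ler_wpM2l (ltW c0) (pow_le_fact k)) _.
  rewrite mulrCA; apply: ler_wpM2l; [exact: expR_ge0| exact: H1].
have kk : 0 < (k%:R : RR) ^+ k by rewrite exprn_gt0.
have H3 : c <= expR k%:R * n%:R ^+ k / k%:R ^+ k by rewrite ler_pdivlMr.
have pos : 0 < (expR k%:R * n%:R ^+ k / k%:R ^+ k : RR).
  exact: divr_gt0 (mulr_gt0 (expR_gt0 _) (exprn_gt0 _ np)) kk.
rewrite -(ler_ln (x:=c)) ?posrE // in H3.
apply: (le_trans H3).
rewrite ln_div ?posrE ?mulr_gt0 ?expR_gt0 ?exprn_gt0 //.
rewrite lnM ?posrE ?expR_gt0 ?exprn_gt0 // expRK !lnXn // ln_div ?posrE //.
set a := ln (n%:R : RR); set b := ln (k%:R : RR).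
rewrite -[a *+ k]mulr_natl -[b *+ k]mulr_natl; rewrite le_eqVlt; apply/orP; left; apply/eqP; ring.
Qed.

Lemma e3 : expR (1 : RR) <= 3.
Proof.
rewrite -Rstruct_topology.RexpE.RexpE. apply/RleP.
have -> : (3 : Rdefinitions.R) = 3%R by rewrite -INRE (RIneq.INR_IZR_INZ 3).
exact: Rpower.exp_le_3.
Qed.

Lemma supp_pos (T : finType) (p : {ffun T -> RR}) :
  is_distr p -> (0 < #|[set x | p x != 0%R]|)%N.
Proof.
move=> [p0 p1]; set S := [set x | p x != 0].
rewrite lt0n; apply/negP => /eqP /cards0_eq S0.
move: p1; rewrite big1 => [/eqP|x _]; first by rewrite eq_sym oner_eq0.
apply/eqP; apply: contraT => px.
have : x \in S by rewrite inE.
by rewrite S0 inE.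
Qed.

Theorem proposition3 :
  exists (C : RR) (n0 : nat), 0 < C /\
    forall (n k : nat), (n0 <= n)%N -> (1 <= k)%N ->
      (k%:R <= n%:R / ln (n%:R : RR)) -> ~~ odd (n * k) ->
      forall p : {ffun graph n -> RR},
        is_distr p ->
        (forall g : graph n, p g != 0 -> regular k g) ->
        dual_total_correlation p <= C * (k%:R * n%:R * ln (n%:R / k%:R)).
Proof.
have l2 : 0 < ln (2 : RR) by rewrite ln_gt0 // ltr1n.
exists (1 + (ln (2 : RR))^-1), 9%N; split.
  by rewrite addr_gt0 ?invr_gt0.
move=> n k n9 k1 hk _ p pd preg.
rewrite /dual_total_correlation big1 ?subr0; last first. move=> i _. exact: (@cond0 n k p preg i).
set N : RR := n%:R; set K : RR := k%:R.
have N9 : 9 <= N by rewrite /N ler_nat.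
have Np : 0 < N by apply: lt_le_trans N9.
have Kp : 0 < K by rewrite /K ltr0n.
have lnN : 2 <= ln N.
  have e2 : expR (2 : RR) <= 9.
    have h : (2 : RR) = 1 + 1 by lra.
    rewrite h expRD.
    have := e3; have := expR_ge0 (1 : RR); nra.
  have : ln (expR (2 : RR)) <= ln N.
    rewrite ler_ln ?posrE ?expR_gt0 //; lra.
  by rewrite expRK.
have lnNp : 0 < ln N by lra.
have h1 : K * ln N <= N by rewrite -ler_pdivlMr.
have h2 : 2 * K <= N.
  rewrite mulrC; apply: le_trans _ h1; have X := ler_wpM2l (ltW Kp) lnN; exact X.
have KN : K <= N by lra.
have kn : (k <= n)%N by rewrite -(ler_nat RR).
set L := ln (N / K).
have L2 : ln 2 <= L.
  rewrite /L ler_ln ?posrE; [|by []|exact: divr_gt0].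
  by rewrite ler_pdivlMr.
have E1 := @entropy_le _ p pd.
have S1 := @card_supp n k p preg.
have S0 := @supp_pos _ p pd.
have Cp : (0 < 'C(n, k))%N by rewrite bin_gt0.
have E2 : ln (#|[set x | p x != 0]|%:R : RR) <= ln (('C(n, k))%:R ^+ n).
  rewrite -natrX ler_ln ?posrE ?ltr0n ?expn_gt0 ?Cp // ler_nat; exact: S1.
have E3 : ln (('C(n, k))%:R ^+ n : RR) = N * ln ('C(n, k)%:R).
  by rewrite lnXn ?ltr0n // mulr_natl.
have E4 := @binom_ln n k k1 kn.
have h : 1 + L <= (1 + (ln (2 : RR))^-1) * L.
  have : 1 <= (ln (2 : RR))^-1 * L by rewrite mulrC ler_pdivlMr // mul1r.
  lra.
apply: (le_trans E1); apply: (le_trans E2); rewrite E3.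
have H1 := ler_wpM2l (ltW Np) E4.
have NK : 0 <= N * K by rewrite mulr_ge0 ?ltW.
have H3 := ler_wpM2l NK h.
apply: (le_trans H1).
have -> : N * (K * (1 + L)) = N * K * (1 + L) by ring.
apply: (le_trans H3).
rewrite le_eqVlt; apply/orP; left; apply/eqP; rewrite /K /N; ring.
Qed.
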